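(* Let $\mathcal{S}$ (universe $S$) be the direct limit of a family of substructures $\{\mathcal{S}_i\}_{i\in I}$ (universes $S_i$). Suppose that for every finite set $\{a_0,\ldots,a_n\}\subseteq S$ there is $i\in I$ with $a_0,\ldots,a_n\in S_i$ such that for every $j\ge i$ there exists an isomorphism $f:\mathcal{S}\to\mathcal{S}_j$ with $f(a_l)=a_l$ for $l=0,\ldots,n$. Then $\lim_I\mathrm{Th}(\mathcal{S}_i^* )=\mathrm{Th}(\mathcal{S}^* )$.
   Context: A $\sigma$-structure $\mathcal{S}$ with universe $S$ is the direct limit of a family $\{\mathcal{S}_i\}_{i\in I}$ of substructures if $S=\bigcup_{i\in I}S_i$ and $I$ is partially ordered by $i\le j\iff S_i\subseteq S_j$, this order being directed. $\mathrm{Th}(\mathcal{T}^* )$ is the set of sentences over $\sigma$ expanded by a constant for each element of the universe of $\mathcal{T}$ that are true in $\mathcal{T}$; for substructures of $\mathcal{S}$ these are regarded as subsets of the set of sentences over $\sigma$ expanded by constants for all elements of $S$. For a family $\{\Delta_i\}_{i\in I}$: $\limsup_I \Delta_i=\{\theta: \forall i\ \exists j\ge i\ [\theta\in\Delta_j]\}$, $\liminf_I \Delta_i=\{\theta: \exists i\ \forall j\ge i\ [\theta\in\Delta_j]\}$, and $\lim_I\Delta_i=\Delta$ means both equal $\Delta$. *)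

(* Defs.v *)
From mathcomp Require Import all_boot.
Set Implicit Arguments. Unset Strict Implicit. Unset Printing Implicit Defensive.

Record signature := Signature {
  func : Type; fun_ar : func -> nat;
  rel : Type;  rel_ar : rel -> nat }.

Record structure (L : signature) := Structure {
  carrier :> Type;
  fint : forall f : func L, ('I_(fun_ar f) -> carrier) -> carrier;
  rint : forall r : rel L, ('I_(rel_ar r) -> carrier) -> Prop }.

(* Terms / formulas over sigma expanded by a constant (tpar a) for each
   element a of M; variables are natural numbers. *)
Inductive term (L : signature) (M : Type) : Type :=
| tvar : nat -> term L M
| tpar : M -> term L M
| tapp : forall f : func L, ('I_(fun_ar f) -> term L M) -> term L M.

Inductive formula (L : signature) (M : Type) : Type :=
| feq : term L M -> term L M -> formula L M
| frel : forall r : rel L, ('I_(rel_ar r) -> term L M) -> formula L M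
| fnot : formula L M -> formula L M
| fand : formula L M -> formula L M -> formula L M
| f_or : formula L M -> formula L M -> formula L M
| fimp : formula L M -> formula L M -> formula L M
| fall : nat -> formula L M -> formula L M
| fex : nat -> formula L M -> formula L M.

Arguments tvar {L M}. Arguments tpar {L M}.

Definition upd (M : Type) (e : nat -> M) (x : nat) (a : M) : nat -> M :=
  fun y => if y == x then a else e y.

Fixpoint teval L (S : structure L) (e : nat -> S) (t : term L S) : S :=
  match t with
  | tvar n => e n
  | tpar a => a
  | tapp f args => fint (fun i => teval e (args i))
  end.

(* Satisfaction in the substructure with universe U (quantifiers range
   over U; functions and relations are the restrictions of those of S). *)
Fixpoint sat L (S : structure L) (U : S -> Prop) (e : nat -> S)
    (phi : formula L S) : Prop :=
  match phi with
  | feq t1 t2 => teval e t1 = teval e t2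
  | frel r args => rint (fun i => teval e (args i))
  | fnot p => ~ sat U e p
  | fand p q => sat U e p /\ sat U e q
  | f_or p q => sat U e p \/ sat U e q
  | fimp p q => sat U e p -> sat U e q
  | fall x p => forall a, U a -> sat U (upd e x a) p
  | fex x p => exists a, U a /\ sat U (upd e x a) p
  end.

Fixpoint term_vars_in L M (P : nat -> Prop) (t : term L M) : Prop :=
  match t with
  | tvar n => P n
  | tpar _ => True
  | tapp f args => forall i, term_vars_in P (args i)
  end.

Fixpoint term_params_in L M (U : M -> Prop) (t : term L M) : Prop :=
  match t with
  | tvar _ => True
  | tpar a => U a
  | tapp f args => forall i, term_params_in U (args i)
  end.

Fixpoint fvars_in L M (P : nat -> Prop) (phi : formula L M) : Prop :=
  match phi with
  | feq t1 t2 => term_vars_in P t1 /\ term_vars_in P t2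
  | frel r args => forall i, term_vars_in P (args i)
  | fnot p => fvars_in P p
  | fand p q | f_or p q | fimp p q => fvars_in P p /\ fvars_in P q
  | fall x p | fex x p => fvars_in (fun y => y = x \/ P y) p
  end.

Fixpoint params_in L M (U : M -> Prop) (phi : formula L M) : Prop :=
  match phi with
  | feq t1 t2 => term_params_in U t1 /\ term_params_in U t2
  | frel r args => forall i, term_params_in U (args i)
  | fnot p => params_in U p
  | fand p q | f_or p q | fimp p q => params_in U p /\ params_in U q
  | fall _ p | fex _ p => params_in U p
  end.

Definition sentence L M (phi : formula L M) : Prop :=
  fvars_in (fun _ => False) phi.

(* Th(T^* ) for the substructure T of S with universe U: sentences with
   constants only for elements of U, true in T. *)
Definition Th_sub L (S : structure L) (U : S -> Prop) : formula L S -> Prop :=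
  fun phi => sentence phi /\ params_in U phi /\
             forall e : nat -> S, (forall n, U (e n)) -> sat U e phi.
Arguments Th_sub {L} S U.

Definition Th L (S : structure L) : formula L S -> Prop :=
  Th_sub S (fun _ => True).
Arguments Th {L} S.

Definition is_substructure L (S : structure L) (U : S -> Prop) : Prop :=
  (exists a, U a) /\
  forall (f : func L) (args : 'I_(fun_ar f) -> S),
    (forall i, U (args i)) -> U (fint args).
Arguments is_substructure {L} S U.

Definition idx_le (X : Type) (I : Type) (U : I -> X -> Prop) (i j : I) : Prop :=
  forall x, U i x -> U j x.

Definition direct_limit L (S : structure L) (I : Type) (U : I -> S -> Prop) :
    Prop :=
  (forall i, is_substructure S (U i)) /\
  (forall x : S, exists i, U i x) /\
  (forall i j, idx_le U i j -> idx_le U j i -> i = j) /\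
  inhabited I /\
  (forall i j, exists k, idx_le U i k /\ idx_le U j k).
Arguments direct_limit {L} S {I} U.

Definition is_iso_onto L (S : structure L) (V : S -> Prop) (f : S -> S) : Prop :=
  (forall x, V (f x)) /\
  (forall x y, f x = f y -> x = y) /\
  (forall y, V y -> exists x, f x = y) /\
  (forall (g : func L) (args : 'I_(fun_ar g) -> S),
      f (fint args) = fint (fun i => f (args i))) /\
  (forall (r : rel L) (args : 'I_(rel_ar r) -> S),
      rint args <-> rint (fun i => f (args i))).
Arguments is_iso_onto {L} S V f.

Definition limsup (I X : Type) (le : I -> I -> Prop) (D : I -> X -> Prop) :
    X -> Prop := fun th => forall i, exists j, le i j /\ D j th.

Definition liminf (I X : Type) (le : I -> I -> Prop) (D : I -> X -> Prop) :
    X -> Prop := fun th => exists i, forall j, le i j -> D j th.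

Definition lim_is (I X : Type) (le : I -> I -> Prop) (D : I -> X -> Prop)
    (Delta : X -> Prop) : Prop :=
  (forall th, limsup le D th <-> Delta th) /\
  (forall th, liminf le D th <-> Delta th).

(* Main.v *)
Require Import Defs.
From mathcomp Require Import all_boot.
From Stdlib Require Import ClassicalEpsilon FunctionalExtensionality.

Set Implicit Arguments. Unset Strict Implicit.

Fixpoint inl (T : Type) (x : T) (s : seq T) : Prop :=
  match s with [::] => False | y :: s' => y = x \/ inl x s' end.

Lemma inl_cat T (x : T) s1 s2 : inl x s1 \/ inl x s2 -> inl x (s1 ++ s2).
Proof.
elim: s1 => [|y s IH] /=; first by case.
by case=> [[->|H]|H]; [left|right; apply: IH; left|right; apply: IH; right].
Qed.

Lemma inl_flatten T (x : T) (ss : seq (seq T)) s :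
  inl s ss -> inl x s -> inl x (flatten ss).
Proof.
elim: ss => [|y ss IH] //= [<-|H] Hx; apply: inl_cat; first by left.
by right; apply: IH.
Qed.

Lemma inl_map (A : eqType) T (f : A -> T) (a : A) s :
  a \in s -> inl (f a) (map f s).
Proof.
elim: s => [|y s IH] //=; rewrite in_cons => /orP [/eqP ->|H]; [by left|right; exact: IH].
Qed.

Lemma inl_nth T (d x : T) s : inl x s -> exists k, k <= size s /\ nth d s k = x.
Proof.
elim: s => [|y s IH] //= [->|H]; first by exists 0.
have [k [Hk Hn]] := IH H. by exists k.+1.
Qed.

Section Params.
Variables (L : signature) (M : Type).

Fixpoint tpars (t : term L M) : seq M :=
  match t with
  | tvar _ => [::]
  | tpar a => [:: a]
  | tapp f args => flatten (map (fun i => tpars (args i)) (enum 'I_(fun_ar f)))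
  end.

Fixpoint fpars (phi : formula L M) : seq M :=
  match phi with
  | feq t1 t2 => tpars t1 ++ tpars t2
  | Defs.frel r args => flatten (map (fun i => tpars (args i)) (enum 'I_(rel_ar r)))
  | fnot p => fpars p
  | fand p q | f_or p q | fimp p q => fpars p ++ fpars q
  | fall _ p | fex _ p => fpars p
  end.



Lemma term_mono (P Q : M -> Prop) (t : term L M) :
  term_params_in P t -> (forall b, P b -> Q b) -> term_params_in Q t.
Proof.
move=> H0 PQ; move: H0; elim: t => [n|a|f args IH] /=; first by []; first exact: PQ.
move=> H i; exact: IH.
Qed.

Lemma form_mono (P Q : M -> Prop) (phi : formula L M) :
  params_in P phi -> (forall b, P b -> Q b) -> params_in Q phi.
Proof.
move=> H0 PQ; move: H0; elim: phi => /=.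
- move=> t1 t2 [H1 H2]; split; [exact: term_mono H1 PQ|exact: term_mono H2 PQ].
- move=> r args H i; exact: term_mono (H i) PQ.
- by [].
- by move=> p Hp q Hq [A B]; split; [apply: Hp A|apply: Hq B].
- by move=> p Hp q Hq [A B]; split; [apply: Hp A|apply: Hq B].
- by move=> p Hp q Hq [A B]; split; [apply: Hp A|apply: Hq B].
- by [].
- by [].
Qed.

Lemma tpars_ok (t : term L M) : term_params_in (fun b => inl b (tpars t)) t.
Proof.
elim: t => [n|a|f args IH] /=; first by []; first by left.
move=> i; apply: (term_mono (Q := fun b => inl b _) (IH i)) => b Hb.
apply: (inl_flatten (s := tpars (args i))) => //.
apply: (inl_map (fun i => tpars (args i))). by rewrite mem_enum.
Qed.

Lemma fpars_ok (phi : formula L M) : params_in (fun b => inl b (fpars phi)) phi.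
Proof.
elim: phi => /=.
- move=> t1 t2; split; apply: (term_mono (Q := fun b => inl b _) (tpars_ok _)) => b Hb; apply: inl_cat; tauto.
- move=> r args i; apply: (term_mono (Q := fun b => inl b _) (tpars_ok _)) => b Hb.
  apply: (inl_flatten (s := tpars (args i))) => //.
  apply: (inl_map (fun i => tpars (args i))). by rewrite mem_enum.
- by [].
- by move=> p Hp q Hq; split; [apply: (form_mono (Q := fun b => inl b _) Hp)|apply: (form_mono (Q := fun b => inl b _) Hq)] => b Hb; apply: inl_cat; tauto.
- by move=> p Hp q Hq; split; [apply: (form_mono (Q := fun b => inl b _) Hp)|apply: (form_mono (Q := fun b => inl b _) Hq)] => b Hb; apply: inl_cat; tauto.
- by move=> p Hp q Hq; split; [apply: (form_mono (Q := fun b => inl b _) Hp)|apply: (form_mono (Q := fun b => inl b _) Hq)] => b Hb; apply: inl_cat; tauto.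
- by [].
- by [].
Qed.

Lemma fin_params (d : M) (phi : formula L M) :
  exists n (a : nat -> M), params_in (fun b => exists l, l <= n /\ a l = b) phi.
Proof.
exists (size (fpars phi)), (fun k => nth d (fpars phi) k).
apply: (form_mono (Q := fun b => exists l, l <= size (fpars phi) /\ nth d (fpars phi) l = b) (fpars_ok phi)) => b Hb; exact: inl_nth.
Qed.

Fixpoint tmap (f : M -> M) (t : term L M) : term L M :=
  match t with
  | tvar n => tvar n
  | tpar a => tpar (f a)
  | tapp g args => @tapp L M g (fun i => tmap f (args i))
  end.

Fixpoint fmap (f : M -> M) (phi : formula L M) : formula L M :=
  match phi with
  | feq t1 t2 => feq (tmap f t1) (tmap f t2)
  | Defs.frel r args => @Defs.frel L M r (fun i => tmap f (args i))
  | fnot p => fnot (fmap f p)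
  | fand p q => fand (fmap f p) (fmap f q)
  | f_or p q => f_or (fmap f p) (fmap f q)
  | fimp p q => fimp (fmap f p) (fmap f q)
  | fall x p => fall x (fmap f p)
  | fex x p => fex x (fmap f p)
  end.

Lemma tmap_id f (t : term L M) : term_params_in (fun b => f b = b) t -> tmap f t = t.
Proof.
elim: t => [n|a|g args IH] /=; first by []; first by move=> ->.
move=> H; congr tapp; apply: functional_extensionality => i; exact: IH.
Qed.

Lemma fmap_id f (phi : formula L M) : params_in (fun b => f b = b) phi -> fmap f phi = phi.
Proof.
elim: phi => /=.
- by move=> t1 t2 [H1 H2]; rewrite !tmap_id.
- move=> r args H; congr Defs.frel; apply: functional_extensionality => i; exact: tmap_id.
- by move=> p IH H; rewrite IH.
- by move=> p Hp q Hq [A B]; rewrite Hp ?Hq.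
- by move=> p Hp q Hq [A B]; rewrite Hp ?Hq.
- by move=> p Hp q Hq [A B]; rewrite Hp ?Hq.
- by move=> x p IH H; rewrite IH.
- by move=> x p IH H; rewrite IH.
Qed.
End Params.

Section Iso.
Variables (L : signature) (S : structure L) (V : S -> Prop) (f : S -> S).
Hypothesis iso : is_iso_onto S V f.

Lemma teval_iso (e e' : nat -> S) (t : term L S) :
  (forall n, f (e n) = e' n) -> f (teval e t) = teval e' (tmap f t).
Proof.
move=> He; elim: t => [n|a|g args IH] /=; first by []; first by [].
case: iso => _ [_ [_ [Hf _]]]; rewrite Hf; congr fint.
apply: functional_extensionality => i; exact: IH.
Qed.

Lemma upd_iso (e e' : nat -> S) x a :
  (forall n, f (e n) = e' n) -> forall n, f (upd e x a n) = upd e' x (f a) n.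
Proof. by move=> He n; rewrite /upd; case: (n == x). Qed.

Lemma sat_iso (phi : formula L S) : forall (e e' : nat -> S),
  (forall n, f (e n) = e' n) ->
  (sat (fun _ => True) e phi <-> sat V e' (fmap f phi)).
Proof.
case: iso => HV [Hinj [Hsurj [Hfun Hrel]]].
elim: phi => /=.
- move=> t1 t2 e e' He; rewrite -!(teval_iso _ He); split; [by move->|exact: Hinj].
- move=> r args e e' He; rewrite Hrel.
  have -> : (fun i => f (teval e (args i))) = (fun i => teval e' (tmap f (args i))).
    by apply: functional_extensionality => i; exact: teval_iso.
  by [].
- by move=> p IH e e' He; rewrite (IH e e' He).
- by move=> p Hp q Hq e e' He; rewrite (Hp e e' He) (Hq e e' He).
- by move=> p Hp q Hq e e' He; rewrite (Hp e e' He) (Hq e e' He).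
- by move=> p Hp q Hq e e' He; rewrite (Hp e e' He) (Hq e e' He).
- move=> x p IH e e' He; split.
  + move=> H b Vb; have [a <-] := Hsurj b Vb.
    by apply/(IH _ _ (upd_iso x a He)); apply: H.
  + move=> H a _; apply/(IH _ _ (upd_iso x a He)); exact: H.
- move=> x p IH e e' He; split.
  + move=> [a [_ H]]; exists (f a); split; first exact: HV.
    by apply/(IH _ _ (upd_iso x a He)).
  + move=> [b [Vb H]]; have [a Ha] := Hsurj b Vb; exists a; split => //.
    by apply/(IH _ _ (upd_iso x a He)); rewrite Ha.
Qed.

Lemma key (phi : formula L S) :
  params_in (fun b => f b = b) phi ->
  ((forall e, sat (fun _ => True) e phi) <->
   (forall e, (forall n, V (e n)) -> sat V e phi)).
Proof.
move=> Hp; have Hfix := fmap_id Hp.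
case: iso => HV [Hinj [Hsurj _]]; split.
- move=> H e' He'.
  pose e := fun n => proj1_sig (constructive_indefinite_description _ (Hsurj _ (He' n))).
  have He : forall n, f (e n) = e' n.
    by move=> n; rewrite /e; case: constructive_indefinite_description.
  rewrite -Hfix; apply/(sat_iso phi He); exact: H.
- move=> H e; apply/(sat_iso phi (e' := fun n => f (e n))) => //.
  rewrite Hfix; apply: H => n; exact: HV.
Qed.
End Iso.

Theorem proposition3p7 (L : signature) (S : structure L) (I : Type)
    (U : I -> S -> Prop) :
  direct_limit S U ->
  (forall (n : nat) (a : nat -> S),
     exists i : I,
       (forall l, l <= n -> U i (a l)) /\
       forall j : I, idx_le U i j ->
         exists f : S -> S, is_iso_onto S (U j) f /\
                            (forall l, l <= n -> f (a l) = a l)) ->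
  lim_is (idx_le U) (fun i => Th_sub S (U i)) (Th S).
Proof.
move=> [Hsub [Hcov [_ [[i0] Hdir]]]] Hyp.
have [d _] := (Hsub i0).1.
have main : forall phi, exists i, forall j, idx_le U i j ->
    (Th S phi <-> Th_sub S (U j) phi).
  move=> phi; have [n [a Ha]] := fin_params d phi.
  have [i [HUi Hj]] := Hyp n a; exists i => j Hij.
  have [f [Hiso Hfix]] := Hj j Hij.
  have Hpf : params_in (fun b => f b = b) phi.
    by apply: (form_mono (Q := fun b => f b = b) Ha) => b [l [Hl <-]]; exact: Hfix.
  have HpU : params_in (U j) phi.
    by apply: (form_mono (Q := U j) Ha) => b [l [Hl <-]]; apply: Hij; exact: HUi.
  have HpT : params_in (fun _ : S => True) phi by apply: (form_mono (Q := fun _ => True) Ha).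
  have K := key Hiso Hpf.
  rewrite /Th /Th_sub; split.
  - move=> [Hs [_ H]]; split => //; split => //; apply: (proj1 K) => e; exact: H.
  - move=> [Hs [_ H]]; split => //; split => // e _; by apply: (proj2 K).
split => phi.
- split.
  + move=> H; have [i Hi] := main phi; have [j [Hij _]] := H i.
    have [k [Hjk Hik]] := Hdir j i.
    have [m [Hkm Hm]] := H k.
    apply/(Hi m) => //; move=> x Hx; apply: Hkm; exact: Hik.
  + move=> H i; have [i' Hi'] := main phi; have [k [Hik Hi'k]] := Hdir i i'.
    by exists k; split => //; apply/(Hi' k).
- split.
  + move=> [i H]; have [i' Hi'] := main phi; have [k [Hik Hi'k]] := Hdir i i'.
    by apply/(Hi' k) => //; apply: H.
  + move=> H; have [i Hi] := main phi; exists i => j Hij; by apply/(Hi j).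
Qed.
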